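(* Let $G$ be the directed graph with distinct vertices $v_1,v_2,\dots$, $w_2,w_3,\dots$, and $u_2,u_3,\dots$; write $w_1:=v_1$. Its edges are $v_i\to v_{i+1}$ ($i\ge1$), $w_i\to w_{i+1}$ ($i\ge1$), $w_i\to u_i$ ($i\ge2$), and $u_i\to v_{i+1}$ ($i\ge2$), and birthdates are $t(v_i)=t(w_i)=i$, $t(u_i)=i+\tfrac12$. Then $(G,t)$ is an infinite biosphere, and $v_2$ does not belong to any maximal element of $\mathrm{IAP}\cap\mathrm{CA}\cap\mathrm{REF}$.
   Context: An infinite biosphere is a directed graph $G$ together with a function $t$ assigning a real number $t(v)$ to each vertex, such that: (1) if $v$ is a parent of $w$ (edge from $v$ to $w$) then $t(v)<t(w)$; (2) for every $r\in\mathbb R$ at most finitely many vertices $v$ have $t(v)<r$; (3) every vertex has finitely many children; (4) $G$ is infinite. $v$ is an ancestor of $w$ (and $w$ a descendant of $v$) if there is a directed path $v=v_1,\dots,v_n=w$ with $n>1$. $\mathrm{IAP}$: sets $S$ of vertices such that no $v\in S$ has both infinitely many descendants in $S$ and infinitely many non-descendants in $S$. $\mathrm{CA}$: sets $S$ for which there exists $v\in S$ such that every $w\in S$ with $w\neq v$ is a descendant of $v$. $\mathrm{REF}$: sets $S$ such that every $v\in S$ with infinitely many descendants in $G$ has infinitely many descendants in $S$. A maximal element of a family of sets is a member not properly contained in any other member. *)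

(* Defs.v *)
From Stdlib Require Import Reals List Relations.
Open Scope R_scope.

Definition finite_pred {T : Type} (P : T -> Prop) : Prop :=
  exists l : list T, forall x, P x -> In x l.
Definition infinite_pred {T : Type} (P : T -> Prop) : Prop := ~ finite_pred P.

(* A directed graph on vertex type T is given by an edge relation E
   (E v w  means v is a parent of w); t is the birthdate function. *)
Definition is_biosphere {T : Type} (E : T -> T -> Prop) (t : T -> R) : Prop :=
  (forall v w, E v w -> t v < t w) /\
  (forall r : R, finite_pred (fun v => t v < r)) /\
  (forall v, finite_pred (fun w => E v w)) /\
  infinite_pred (fun _ : T => True).

Definition descendant {T : Type} (E : T -> T -> Prop) (v w : T) : Prop :=
  clos_trans T E v w.

Definition IAP {T : Type} (E : T -> T -> Prop) (S : T -> Prop) : Prop :=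
  forall v, S v ->
    ~ (infinite_pred (fun w => S w /\ descendant E v w) /\
       infinite_pred (fun w => S w /\ ~ descendant E v w)).

Definition CA {T : Type} (E : T -> T -> Prop) (S : T -> Prop) : Prop :=
  exists v, S v /\ forall w, S w -> w <> v -> descendant E v w.

Definition REF {T : Type} (E : T -> T -> Prop) (S : T -> Prop) : Prop :=
  forall v, S v -> infinite_pred (fun w => descendant E v w) ->
    infinite_pred (fun w => S w /\ descendant E v w).

Definition maximal_in {T : Type} (F : (T -> Prop) -> Prop) (M : T -> Prop) : Prop :=
  F M /\ forall S, F S -> (forall x, M x -> S x) -> forall x, S x -> M x.

Definition IAP_CA_REF {T : Type} (E : T -> T -> Prop) (S : T -> Prop) : Prop :=
  IAP E S /\ CA E S /\ REF E S.

(* The concrete graph.  Index shifts: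
   vV i = v_(i+1)  (i >= 0),  so vV 0 = v_1 = w_1,
   vW i = w_(i+2)  (i >= 0),
   vU i = u_(i+2)  (i >= 0). *)
Inductive vert : Type :=
| vV : nat -> vert
| vW : nat -> vert
| vU : nat -> vert.

Inductive G_edge : vert -> vert -> Prop :=
| e_vv : forall i, G_edge (vV i) (vV (S i))
| e_w1w2 : G_edge (vV 0) (vW 0)                      (* w_1 = v_1 -> w_2 *)
| e_ww : forall i, G_edge (vW i) (vW (S i))
| e_wu : forall i, G_edge (vW i) (vU i)
| e_uv : forall i, G_edge (vU i) (vV (S (S i))).     (* u_i -> v_(i+1), i>=2 *)

Definition G_t (x : vert) : R :=
  match x with
  | vV i => INR i + 1
  | vW i => INR i + 2
  | vU i => INR i + 2 + / 2
  end.

(* Main.v *)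
Require Import Defs.
From Stdlib Require Import Reals List Relations Lia Lra Classical.

Definition idx (x : vert) : nat := match x with vV i => i | vW i => i | vU i => i end.
Definition sumidx (l : list vert) : nat := fold_right (fun x a => (idx x + a)%nat) 0%nat l.

Lemma in_sum : forall l x, In x l -> (idx x <= sumidx l)%nat.
Proof. induction l; simpl; intros x H; [contradiction|]. destruct H; subst; [lia|].
  specialize (IHl _ H); lia. Qed.

Lemma fresh_V : forall l n, exists j, (n <= j)%nat /\ ~ In (vV j) l.
Proof. intros l n; exists (n + S (sumidx l))%nat; split; [lia|].
  intro H; apply in_sum in H; simpl in H; lia. Qed.
Lemma fresh_W : forall l, exists k, ~ In (vW k) l.
Proof. intros l; exists (S (sumidx l)). intro H; apply in_sum in H; simpl in H; lia. Qed.

Notation desc := (descendant G_edge).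

Lemma vv_chain : forall i j, (i < j)%nat -> desc (vV i) (vV j).
Proof. intros i j; induction j; intros H; [lia|].
  destruct (Nat.eq_dec i j) as [->|Hn].
  - apply t_step; constructor.
  - eapply t_trans; [apply IHj; lia| apply t_step; constructor]. Qed.

Definition nx (x : vert) : nat := match x with vV i => S i | vW i => (i+2)%nat | vU i => (i+2)%nat end.

Lemma desc_large : forall x j, (nx x <= j)%nat -> desc x (vV j).
Proof.
  assert (Hu : forall i j, (i + 2 <= j)%nat -> desc (vU i) (vV j)).
  { intros i j H. destruct (Nat.eq_dec j (S (S i))) as [->|Hn].
    - apply t_step; constructor.
    - eapply t_trans; [apply t_step; constructor| apply vv_chain; lia]. }
  intros [i|i|i] j H; simpl in H.
  - apply vv_chain; lia.
  - eapply t_trans; [apply t_step; constructor| apply Hu; lia].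
  - apply Hu; lia.
Qed.

Lemma desc_v0W : forall i, desc (vV 0) (vW i).
Proof. induction i. - apply t_step; constructor.
  - eapply t_trans; [apply IHi| apply t_step; constructor]. Qed.

Lemma desc_v0 : forall w, w <> vV 0 -> desc (vV 0) w.
Proof. intros [i|i|i] H.
  - destruct i; [congruence|]. apply vv_chain; lia.
  - apply desc_v0W.
  - eapply t_trans; [apply desc_v0W| apply t_step; constructor]. Qed.

Lemma desc_from_v : forall x y, desc x y -> (exists j, x = vV (S j)) -> exists j, y = vV (S j).
Proof. intros x y H; induction H; intros [j ->].
  - inversion H; subst; eauto.
  - apply IHclos_trans2. apply IHclos_trans1. eauto. Qed.

Lemma infinite_V : forall (P : vert -> Prop) n, (forall j, (n <= j)%nat -> P (vV j)) -> infinite_pred P.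
Proof. intros P n H [l Hl]. destruct (fresh_V l n) as [j [Hj Hn]]. apply Hn, Hl, H, Hj. Qed.

Lemma biosphere : is_biosphere G_edge G_t.
Proof.
  split; [|split; [|split]].
  - intros v w H; inversion H; subst; unfold G_t; rewrite ?S_INR; simpl; lra.
  - intros r. destruct (INR_archimed 1%R r ltac:(lra)) as [N HN].
    exists (map vV (seq 0 N) ++ map vW (seq 0 N) ++ map vU (seq 0 N)).
    intros [i|i|i] Ht; simpl in Ht; rewrite !in_app_iff, !in_map_iff;
      assert (i < N)%nat by (apply INR_lt; pose proof (pos_INR i); lra).
    + left; exists i; split; auto; apply in_seq; lia.
    + right; left; exists i; split; auto; apply in_seq; lia.
    + right; right; exists i; split; auto; apply in_seq; lia.
  - intros [[|i]|i|i].
    + exists (vV 1 :: vW 0 :: nil); intros w H; inversion H; subst; simpl; tauto.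
    + exists (vV (S (S i)) :: nil); intros w H; inversion H; subst; simpl; tauto.
    + exists (vW (S i) :: vU i :: nil); intros w H; inversion H; subst; simpl; tauto.
    + exists (vV (S (S i)) :: nil); intros w H; inversion H; subst; simpl; tauto.
  - intros [l Hl]. destruct (fresh_W l) as [k Hk]. apply Hk, Hl; exact I.
Qed.

Lemma many_V : forall (Q : vert -> Prop), infinite_pred Q ->
  (forall w, Q w -> exists j, w = vV j) -> forall N, exists j, (N <= j)%nat /\ Q (vV j).
Proof.
  intros Q HQ Hv N. apply NNPP; intro Hc. apply HQ.
  exists (map vV (seq 0 N)). intros w Hw. destruct (Hv w Hw) as [j ->].
  apply in_map_iff; exists j; split; auto; apply in_seq.
  destruct (Compare_dec.le_lt_dec N j) as [Hle|Hlt]; [exfalso; apply Hc; exists j; split; auto| lia].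
Qed.

Theorem mainTheorem12 :
  is_biosphere G_edge G_t /\
  forall M : vert -> Prop, maximal_in (IAP_CA_REF G_edge) M -> ~ M (vV 1).
Proof.
  split; [exact biosphere|].
  intros M [[HI [HC HR]] Hmax] H1.
  assert (Hinf : infinite_pred (fun w => M w /\ desc (vV 1) w)).
  { apply HR; auto. apply (infinite_V _ 2); intros j Hj; apply vv_chain; lia. }
  assert (Hfin : finite_pred (fun w => M w /\ ~ desc (vV 1) w)).
  { apply NNPP; intro Hn. apply (HI _ H1); split; auto. }
  destruct Hfin as [l0 Hl0].
  destruct (fresh_W l0) as [k Hk].
  assert (Hmany := many_V _ Hinf).
  assert (Hmany' : forall N, exists j, (N <= j)%nat /\ M (vV j)).
  { intros N; destruct Hmany with (N := N) as [j [Hj [HM _]]]; [|eauto].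
    intros w Hw. destruct (desc_from_v _ _ (proj2 Hw) (ex_intro _ 0%nat eq_refl)) as [j ->]; eauto. }
  set (M' := fun x => M x \/ x = vV 0 \/ x = vW k).
  assert (HM' : IAP_CA_REF G_edge M').
  { split; [|split].
    - intros x Hx [_ Hnd]. apply Hnd.
      exists (vV 0 :: vW k :: l0 ++ map vV (seq 0 (nx x))).
      intros w [Hw Hnw]. simpl. destruct Hw as [Hw|[ -> | -> ]]; auto.
      right; right; apply in_app_iff.
      destruct (classic (desc (vV 1) w)) as [Hd|Hd]; [|left; apply Hl0; auto].
      right. destruct (desc_from_v _ _ Hd (ex_intro _ 0%nat eq_refl)) as [j ->].
      apply in_map_iff; exists (S j); split; auto; apply in_seq.
      destruct (Compare_dec.le_lt_dec (nx x) (S j)) as [Hle|Hlt]; [exfalso; apply Hnw, desc_large; auto| lia].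
    - exists (vV 0); split; [right; left; auto|]. intros w _ Hw; apply desc_v0; auto.
    - intros x Hx _ [l Hl]. destruct (Hmany' (nx x + S (sumidx l))%nat) as [j [Hj HMj]].
      assert (Hin : In (vV j) l). { apply Hl; split; [left; auto| apply desc_large; lia]. }
      apply in_sum in Hin; simpl in Hin; lia. }
  assert (HWk : M (vW k)).
  { apply (Hmax M' HM'); [intros x Hx; left; auto| right; right; auto]. }
  apply Hk, Hl0; split; auto.
  intro Hd; destruct (desc_from_v _ _ Hd (ex_intro _ 0%nat eq_refl)) as [j Hj]; discriminate.
Qed.
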